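(* Let $(p_{ij}\colon X_j\to X_i)_{i\sqsubseteq j\in I}$ be a projective system of sober spaces and $X,(p_i)_{i\in I}$ its canonical projective limit. Then: (1) whenever $Q_i$ is a compact saturated subset of $X_i$ for each $i\in I$ and $p_{ij}[Q_j]\subseteq Q_i$ for all $i\sqsubseteq j$, the canonical projective limit of the system $(p_{ij}|_{Q_j}\colon Q_j\to Q_i)_{i\sqsubseteq j\in I}$ (i.e., $\{\vec x\in X\mid x_i\in Q_i \text{ for all } i\}$) is a compact saturated subset of $X$; (2) every compact saturated subset $K$ of $X$ is the canonical projective limit of such a system, with $Q_i:=\uparrow p_i[K]$ for each $i\in I$, and moreover $\uparrow p_{ij}[Q_j]=Q_i$ for all $i\sqsubseteq j\in I$.
   Context: A projective system of topological spaces consists of a directed preordered set $(I,\sqsubseteq)$, spaces $X_i$ and continuous maps $p_{ij}\colon X_j\to X_i$ for $i\sqsubseteq j$ with $p_{ii}=\mathrm{id}$ and $p_{ij}\circ p_{jk}=p_{ik}$. Its canonical projective limit is $X=\{\vec x\in\prod_i X_i\mid p_{ij}(x_j)=x_i \text{ for all } i\sqsubseteq j\}$ with the subspace topology of the product and $p_i$ the $i$th projection. The specialization preorder is $x\le y$ iff every open neighbourhood of $x$ contains $y$; $\uparrow A$ is the set of points above some element of $A$; saturated means upward closed. Sober: $T_0$ and every irreducible closed set is the closure of a point. Compactness assumes no separation axiom; subsets $Q_i$ are considered as subspaces. *)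

(* Defs.v *)
From HB Require Import structures.
From mathcomp Require Import all_boot all_order all_algebra.
From mathcomp Require Import all_classical all_reals all_analysis.
Set Implicit Arguments.
Unset Strict Implicit.
Unset Printing Implicit Defensive.
Local Open Scope classical_set_scope.

Definition spec_le {T : topologicalType} (x y : T) : Prop :=
  forall U : set T, open U -> U x -> U y.

Definition upset {T : topologicalType} (A : set T) : set T :=
  [set y | exists2 x, A x & spec_le x y].

Definition saturated {T : topologicalType} (A : set T) : Prop :=
  forall x y, A x -> spec_le x y -> A y.

Definition irreducible_closed {T : topologicalType} (F : set T) : Prop :=
  [/\ F !=set0, closed F &
      forall A B : set T, closed A -> closed B -> F `<=` A `|` B ->
        F `<=` A \/ F `<=` B].

Definition sober (T : topologicalType) : Prop :=
  @kolmogorov_space T /\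
  forall F : set T, irreducible_closed F -> exists x : T, F = closure [set x].

Definition directed_preorder {I : Type} (le : I -> I -> Prop) : Prop :=
  [/\ forall i, le i i,
      forall i j k, le i j -> le j k -> le i k,
      inhabited I &
      forall i j, exists k, le i k /\ le j k].

Definition projective_system {I : Type} (le : I -> I -> Prop)
    (X : I -> topologicalType) (p : forall i j, X j -> X i) : Prop :=
  [/\ directed_preorder le,
      forall i j, le i j -> continuous (p i j),
      forall i (x : X i), p i i x = x &
      forall i j k, le i j -> le j k -> forall x : X k,
        p i j (p j k x) = p i k x].

Definition proj_lim {I : Type} (le : I -> I -> Prop)
    (X : I -> topologicalType) (p : forall i j, X j -> X i)
    : set (prod_topology X) :=
  [set x | forall i j, le i j -> p i j (x j) = x i].

Definition proj_lim_space {I : Type} (le : I -> I -> Prop)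
    (X : I -> topologicalType) (p : forall i j, X j -> X i) : topologicalType :=
  set_type (proj_lim le p).

(* Main.v *)
Require Import Defs.
From HB Require Import structures.
From mathcomp Require Import all_boot all_order all_algebra.
From mathcomp Require Import all_classical all_reals all_analysis.
Local Open Scope classical_set_scope.
Set Implicit Arguments.
Unset Strict Implicit.

Lemma prod_nbhs_proj (I : Type) (X : I -> topologicalType) (f : prod_topology X) i (U : set (X i)) :
  open U -> U (f i) -> nbhs f [set g : prod_topology X | U (g i)].
Proof.
move=> oU Ufi.
have [H _] := @cvg_sup (forall i, X i) I (fun i => Topological.class
    (initial_topology (fun f : (forall i, X i) => f i))) (nbhs f) f _.
apply: (H (@cvg_id _ _) i).
rewrite nbhsE /=. exists [set g : prod_topology X | U (g i)] => //.
split=> //. exists U => //.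
Qed.

Lemma prod_nbhs_dec (I : Type) (le : I -> I -> Prop) (X : I -> topologicalType)
  (p : forall i j, X j -> X i) : projective_system le p ->
  forall (f : prod_topology X), proj_lim le p f ->
  forall B, nbhs f B -> exists i (U : set (X i)), [/\ open U, U (f i) &
    forall z : prod_topology X, proj_lim le p z -> U (z i) -> B z].
Proof.
move=> [[lerefl letr [i0] ledir] pc pid pcomp] f limf.
pose G := fun B : set (prod_topology X) => exists i (U : set (X i)), [/\ open U, U (f i) &
    forall z : prod_topology X, proj_lim le p z -> U (z i) -> B z].
have FG : Filter G.
  constructor.
  - by exists i0, setT; split => //; exact: openT.
  - move=> A B [i [U [oU Uf HU]]] [j [V [oV Vf HV]]].
    have [k [ik jk]] := ledir i j.
    exists k, (p i k @^-1` U `&` p j k @^-1` V); split.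
    + apply: openI; apply: (proj1 (continuousP _) (pc _ _ _)) => //.
    + by split => /=; rewrite limf.
    + move=> z lz [/= zU zV]; split; [apply: HU|apply: HV] => //; [rewrite -(lz _ _ ik)|rewrite -(lz _ _ jk)] => //.
  - by move=> A B AB [i [U [oU Uf HU]]]; exists i, U; split => // z lz /(HU _ lz) /AB.
have [_ H] := @cvg_sup (forall i, X i) I (fun i => Topological.class
    (initial_topology (fun f : (forall i, X i) => f i))) G f FG.
apply: H => i A /= HA; rewrite nbhs_filterE.
move: HA; rewrite (@nbhsE (Topological.Pack (Topological.class (initial_topology (fun f : (forall i, X i) => f i))))) => -[W [[U oU <-] Wf] WA].
by exists i, U; split => // z _ /= Uz; apply: WA.
Qed.

Lemma lim_nbhs_dec (I : Type) (le : I -> I -> Prop) (X : I -> topologicalType)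
  (p : forall i j, X j -> X i) : projective_system le p ->
  forall (x : proj_lim_space le p) B, nbhs x B ->
  exists i (U : set (X i)), [/\ open U, U (sval x i) &
    forall z : proj_lim_space le p, U (sval z i) -> B z].
Proof.
move=> ps x B; rewrite nbhsE => -[W [oW Wx] WB].
case: oW => W' oW' eW.
have : nbhs (sval x) W' by apply: open_nbhs_nbhs; split => //; rewrite -eW in Wx.
case/(prod_nbhs_dec ps (set_mem (svalP x))) => i [U [oU Ux HU]].
exists i, U; split => // z Uz; apply: WB; rewrite -eW; apply: HU => //.
exact: (set_mem (svalP z)).
Qed.

Lemma prod_open_proj (I : Type) (X : I -> topologicalType) i (U : set (X i)) :
  open U -> open [set g : prod_topology X | U (g i)].
Proof. by move=> oU; rewrite openE => g Ug; apply: prod_nbhs_proj. Qed.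

Lemma lim_open_proj (I : Type) (le : I -> I -> Prop) (X : I -> topologicalType)
  (p : forall i j, X j -> X i) i (U : set (X i)) :
  open U -> open [set z : proj_lim_space le p | U (sval z i)].
Proof. by move=> oU; exists [set g : prod_topology X | U (g i)] => //; apply: prod_open_proj. Qed.
Lemma spec_le_refl (T : topologicalType) (x : T) : spec_le x x.
Proof. by []. Qed.

Lemma spec_le_trans (T : topologicalType) (x y z : T) :
  spec_le x y -> spec_le y z -> spec_le x z.
Proof. by move=> h1 h2 U oU Ux; apply: h2 => //; apply: h1. Qed.

Lemma spec_le_cont (S T : topologicalType) (f : S -> T) (x y : S) :
  continuous f -> spec_le x y -> spec_le (f x) (f y).
Proof. by move=> cf h U oU Ux; apply: (h (f @^-1` U)) => //; apply: (proj1 (continuousP _) cf). Qed.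

Lemma spec_le_open (T : topologicalType) (x y : T) (U : set T) :
  open U -> spec_le x y -> U x -> U y.
Proof. by move=> oU h; apply: h. Qed.

Lemma closure1P (T : topologicalType) (x y : T) :
  closure [set x] y <-> spec_le y x.
Proof.
split.
  move=> h U oU Uy; have [z [/= -> //]] := h U (open_nbhs_nbhs (conj oU Uy)).
move=> h B; rewrite nbhsE => -[W [oW Wy] WB]; exists x; split => //.
by apply: WB; apply: h.
Qed.

Lemma compact_directed (T : topologicalType) (A : set T) (D : set (set T)) :
  compact A -> (forall U, D U -> open U) -> D !=set0 ->
  (forall U V, D U -> D V -> exists W, D W /\ U `|` V `<=` W) ->
  A `<=` \bigcup_(U in D) U -> exists U, D U /\ A `<=` U.
Proof.
move=> cA oD [U0 DU0] dD AD.
apply: contrapT => H.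
have H' : forall U, D U -> (A `\` U) !=set0.
  move=> U DU; apply/set0P/eqP => e; apply: H; exists U; split => // x Ax.
  by apply: contrapT => nUx; have : (A `\` U) x by []; rewrite e.
have FF : Filter (filter_from D (fun U => A `\` U)).
  apply: filter_from_filter; first by exists U0.
  move=> U V DU DV; have [W [DW UVW]] := dD U V DU DV.
  by exists W => // x [Ax nWx]; split; split => // ?; apply: nWx; apply: UVW; [left|right].
have PF := filter_from_proper FF H'.
have [|q [Aq clq]] := cA _ PF.
  by exists U0 => // x [].
have [U DU Uq] := AD q Aq.
have [z [[_ nUz] Uz]] := clq (A `\` U) U (ex_intro2 _ _ U DU (fun x h => h))
  (open_nbhs_nbhs (conj (oD U DU) Uq)).
exact: nUz.
Qed.

Lemma upset_compact (T : topologicalType) (A : set T) :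
  compact A -> compact (upset A).
Proof.
move=> cA F PF FA.
pose dn (C : set T) := [set a | exists2 c, C c & spec_le a c].
have FG : Filter (filter_from F (fun C => A `&` dn C)).
  apply: filter_from_filter; first by exists setT; exact: filterT.
  move=> C C' FC FC'; exists (C `&` C'); first exact: filterI.
  by move=> a [Aa [c [Cc C'c] ac]]; split; split => //; exists c.
have PG : ProperFilter (filter_from F (fun C => A `&` dn C)).
  apply: filter_from_proper => // C FC.
  have [c [Cc [a Aa ac]]] := filter_ex (filterI FC FA).
  by exists a; split => //; exists c.
have [|q [Aq clq]] := cA _ PG.
  by exists setT; [exact: filterT|move=> x []].
exists q; split; first by exists q.
move=> C N FC; rewrite nbhsE => -[W [oW Wq] WN].
have [a [[_ [c Cc ac]] Wa]] := clq (A `&` dn C) W (ex_intro2 _ _ C FC (fun x h => h))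
  (open_nbhs_nbhs (conj oW Wq)).
by exists c; split => //; apply: WN; apply: ac.
Qed.

Lemma upset_saturated (T : topologicalType) (A : set T) : saturated (upset A).
Proof. by move=> x y [z Az zx] xy; exists z => //; apply: spec_le_trans xy. Qed.

Lemma lim_cont (I : Type) (le : I -> I -> Prop) (X : I -> topologicalType)
  (p : forall i j, X j -> X i) i :
  continuous (fun z : proj_lim_space le p => sval z i).
Proof.
apply/continuousP => U oU; exact: (lim_open_proj le p oU).
Qed.

Lemma limP (I : Type) (le : I -> I -> Prop) (X : I -> topologicalType)
  (p : forall i j, X j -> X i) (z : proj_lim_space le p) i j :
  le i j -> p i j (sval z j) = sval z i.
Proof. by move=> ij; apply: (set_mem (svalP z)). Qed.

Lemma part2 (I : Type) (le : I -> I -> Prop)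
    (X : I -> topologicalType) (p : forall i j, X j -> X i) :
  projective_system le p ->
  forall K : set (proj_lim_space le p),
     compact K -> saturated K ->
     let Q : forall i, set (X i) :=
       fun i => upset [set sval x i | x in K] in
     [/\ forall i, compact (Q i) /\ saturated (Q i),
         forall i j, le i j -> p i j @` Q j `<=` Q i,
         K = [set x | forall i, Q i (sval x i)] &
         forall i j, le i j -> upset (p i j @` Q j) = Q i].
Proof.
move=> ps; have [[lerefl letr [i0] ledir] pc pid pcomp] := ps.
move=> K cK sK Q.
have QQ : forall i j, le i j -> p i j @` Q j `<=` Q i.
  move=> i j ij _ [w [_ [x Kx <-] xw] <-].
  exists (sval x i); first by exists x.
  rewrite -(limP x ij); exact: spec_le_cont (pc _ _ ij) xw.
split => //.
- move=> i; split; last exact: upset_saturated.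
  apply: upset_compact; apply: continuous_compact => //.
  apply: continuous_subspaceT; exact: lim_cont.
- apply/seteqP; split.
    by move=> x Kx i; exists (sval x i) => //; exists x.
  move=> x Qx; apply: contrapT => nKx.
  pose D := [set W : set (proj_lim_space le p) | exists i (U : set (X i)),
    [/\ open U, ~ U (sval x i) & W = [set z | U (sval z i)]]].
  have [||||W [[i [U [oU nUx ->]]] KW]] := @compact_directed _ K D cK.
  - by move=> W [i [U [oU _ ->]]]; exact: lim_open_proj.
  - by exists set0, i0, set0; split => //; exact: open0.
  - move=> _ _ [i [U [oU nUx ->]]] [j [V [oV nVx ->]]].
    have [k [ik jk]] := ledir i j.
    exists [set z : proj_lim_space le p | (p i k @^-1` U `|` p j k @^-1` V) (sval z k)].
    split.
      exists k, (p i k @^-1` U `|` p j k @^-1` V); split => //.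
        by apply: openU; apply: (proj1 (continuousP _) (pc _ _ _)).
      by rewrite /= (limP x ik) (limP x jk) => -[].
    by move=> z [Uz|Vz]; [left|right]; rewrite /= ?(limP z ik) ?(limP z jk).
  - move=> k Kk.
    have nkx : ~ spec_le k x by move=> kx; apply: nKx; exact: sK kx.
    have [Wo [oO Ok nOx]] : exists Wo, [/\ open Wo, Wo k & ~ Wo x].
      apply: contrapT => h; apply: nkx => Wo oO Ok; apply: contrapT => nOx.
      by apply: h; exists Wo.
    have [i [U [oU Uk HU]]] := lim_nbhs_dec ps (open_nbhs_nbhs (conj oO Ok)).
    exists [set z | U (sval z i)] => //.
    by exists i, U; split => // Ux; apply: nOx; apply: HU.
  - have [_ [k Kk <-] kx] := Qx i.
    by apply: nUx; apply: kx => //; apply: KW.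
- move=> i j ij; apply/seteqP; split.
    move=> y [w QQw wy]; apply: upset_saturated wy.
    exact: QQ ij _ QQw.
  move=> y [_ [x Kx <-] xy]; exists (p i j (sval x j)).
    by exists (sval x j) => //; exists (sval x j) => //; exists x.
  by rewrite (limP x ij).
Qed.

Lemma T0_antisym (T : topologicalType) (a b : T) : kolmogorov_space T ->
  spec_le a b -> spec_le b a -> a = b.
Proof.
move=> k0 ab ba; apply: contrapT => /eqP /k0 [A [[nA nbA]|[nA naA]]].
- move: nA; rewrite inE nbhsE => -[W [oW Wa] WA].
  by move: nbA; rewrite inE; apply; apply: WA; apply: ab.
- move: nA; rewrite inE nbhsE => -[W [oW Wb] WA].
  by move: naA; rewrite inE; apply; apply: WA; apply: ba.
Qed.

Lemma part1 (I : Type) (le : I -> I -> Prop)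
    (X : I -> topologicalType) (p : forall i j, X j -> X i) :
  projective_system le p ->
  (forall i, sober (X i)) ->
  forall Q : forall i, set (X i),
     (forall i, compact (Q i) /\ saturated (Q i)) ->
     (forall i j, le i j -> p i j @` Q j `<=` Q i) ->
     compact [set x : proj_lim_space le p | forall i, Q i (sval x i)].
Proof.
move=> ps sob; have [[lerefl letr [i0] ledir] pc pid pcomp] := ps.
move=> Q hQ QQ F PF FL.
have pcont i j (U : set (X i)) : le i j -> open U -> open (p i j @^-1` U).
  by move=> ij oU; apply: (proj1 (continuousP _) (pc _ _ ij)).
pose T := {i : I & set (X i)}.
pose E i (U : set (X i)) : T := existT _ i U.
pose Z0 : set T := fun t => let: existT i U := t in open U /\
   exists2 S, F S & forall z : proj_lim_space le p, S z -> ~ U (sval z i).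
pose Good (Z : set T) := [/\ (forall i U, Z (E i U) -> open U),
   (forall i j U, le i j -> Z (E i U) -> Z (E j (p i j @^-1` U))),
   (forall i U U', Z (E i U) -> Z (E i U') -> Z (E i (U `|` U'))),
   (forall i U, Z (E i U) -> ~ (Q i `<=` U)) & Z0 `<=` Z].
have GZ0 : Good Z0.
  split => //.
  - by move=> i U [].
  - move=> i j U ij [oU [S FS HS]]; split; first exact: pcont.
    by exists S => // z Sz /=; rewrite (limP z ij); apply: HS.
  - move=> i U U' [oU [S FS HS]] [oU' [S' FS' HS']]; split; first exact: openU.
    by exists (S `&` S'); [exact: filterI|move=> z [Sz S'z] [/HS|/HS']; apply].
  - move=> i U [oU [S FS HS]] QU.
    have [z [Sz Lz]] := filter_ex (filterI FS FL).
    by apply: (HS z Sz); apply: QU; apply: Lz.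
have Z0E i : Z0 (E i set0).
  split; [exact: open0|exists setT; last by move=> z _ []].
  exact: (@filterT _ F (@filter_filter _ F PF)).
pose P := fun Z => Z = set0 \/ Good Z.
have [Z [PZ Zmax]] : exists Z, P Z /\ forall B, Z `<` B -> ~ P B.
  apply: Zorn_bigcup => Fc FcP Fctot.
  have [[Z1 FcZ1 GZ1]|nG] := pselect (exists2 Z, Fc Z & Good Z); last first.
    left; apply/seteqP; split => // t [Z FcZ Zt].
    have [Z00|GZ] := FcP Z FcZ; first by rewrite Z00 in Zt.
    by exfalso; apply: nG; exists Z.
  have mG Z t : Fc Z -> Z t -> Good Z.
    by move=> FcZ Zt; have [Z00|//] := FcP Z FcZ; rewrite Z00 in Zt.
  right; split.
  - by move=> i U [Z FcZ ZU]; have [h _ _ _ _] := mG _ _ FcZ ZU; exact: h.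
  - move=> i j U ij [Z FcZ ZU]; have [_ h _ _ _] := mG _ _ FcZ ZU.
    by exists Z => //; exact: h.
  - move=> i U U' [Z FcZ ZU] [Z' FcZ' ZU'].
    have [ZZ'|Z'Z] := Fctot _ _ FcZ FcZ'.
      have [_ _ h _ _] := mG _ _ FcZ' ZU'.
      by exists Z' => //; apply: h => //; apply: ZZ'.
    have [_ _ h _ _] := mG _ _ FcZ ZU.
    by exists Z => //; apply: h => //; apply: Z'Z.
  - by move=> i U [Z FcZ ZU]; have [_ _ _ h _] := mG _ _ FcZ ZU; exact: h.
  - by move=> t Z0t; exists Z1 => //; have [_ _ _ _ h] := GZ1; exact: h.
have GZ : Good Z.
  case: PZ => // Z00; exfalso; apply: (Zmax Z0); last by right.
  rewrite Z00; split => // h; have := h (E i0 set0) (Z0E i0); done.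
have [Zo Zp Zu Zq Z0Z] := GZ.
pose V i := \bigcup_(U in [set U : set (X i) | Z (E i U)]) U.
have oV i : open (V i) by apply: bigcup_open => U; exact: Zo.
have Vp i j : le i j -> p i j @^-1` V i `<=` V j.
  by move=> ij y [U ZU Uy]; exists (p i j @^-1` U) => //; exact: Zp.
have QV i : ~ (Q i `<=` V i).
  move=> QiV.
  have [||||U [ZU QU]] := @compact_directed _ (Q i) [set U : set (X i) | Z (E i U)] (proj1 (hQ i)).
  - by move=> U; exact: Zo.
  - by exists set0; exact: Z0Z.
  - by move=> U U' ZU ZU'; exists (U `|` U'); split => //; exact: Zu.
  - exact: QiV.
  - exact: Zq ZU QU.
have Mx i (U : set (X i)) : open U -> ~ Z (E i U) ->
    exists2 m, le i m & Q m `<=` V m `|` p i m @^-1` U.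
  move=> oU nZU; apply: contrapT => H.
  pose Z' : set T := fun t => let: existT k Ob := t in open Ob /\
    exists m, [/\ le i m, le k m & (exists2 W, Z (E m W) &
      p k m @^-1` Ob `<=` W `|` p i m @^-1` U)].
  have ZZ' : Z `<=` Z'.
    case=> k Ob ZO; split; first exact: Zo ZO.
    have [m [im km]] := ledir i k.
    by exists m; split => //; exists (p k m @^-1` Ob); [exact: Zp|move=> y; left].
  apply: (Zmax Z'); first split => //.
    move=> h; apply: nZU; apply: h; split => //.
    exists i; split => //; exists set0; first exact: Z0Z.
    by move=> y; right.
  right; split.
  - by move=> k Ob [].
  - move=> k l Ob kl [oO [m [im km [W ZW HW]]]]; split; first exact: pcont.
    have [n [mn ln]] := ledir m l.
    exists n; split; [exact: letr im mn|exact: letr ln|].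
    exists (p m n @^-1` W); first exact: Zp.
    move=> y /=; rewrite (pcomp _ _ _ kl ln) -(pcomp _ _ _ km mn) -(pcomp _ _ _ im mn).
    exact: HW.
  - move=> k Ob Ob' [oO [m [im km [W ZW HW]]]] [oO' [m' [im' km' [W' ZW' HW']]]].
    split; first exact: openU.
    have [n [mn m'n]] := ledir m m'.
    exists n; split; [exact: letr im mn|exact: letr km mn|].
    exists (p m n @^-1` W `|` p m' n @^-1` W'); first by apply: Zu; exact: Zp.
    move=> y /= [Oy|Ob'y].
      move: Oy; rewrite -(pcomp _ _ _ km mn) -(pcomp _ _ _ im mn) => /HW [h|h];
        by [left; left|right].
    move: Ob'y; rewrite -(pcomp _ _ _ km' m'n) -(pcomp _ _ _ im' m'n) => /HW' [h|h];
      by [left; right|right].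
  - move=> k Ob [oO [m [im km [W ZW HW]]]] QO; apply: H; exists m => // y Qy.
    have /HW [Wy|Uy] : Ob (p k m y) by apply: QO; apply: (QQ _ _ km); exists y.
      by left; exists W.
    by right.
  - by move=> t /Z0Z /ZZ'.
have Mpull i m n (U : set (X i)) : le i m -> le m n ->
    Q m `<=` V m `|` p i m @^-1` U -> Q n `<=` V n `|` p i n @^-1` U.
  move=> im mn H y Qy.
  have /H [h|h] : Q m (p m n y) by apply: (QQ _ _ mn); exists y.
    by left; apply: (Vp _ _ mn).
  by right; rewrite /= -(pcomp _ _ _ im mn).
pose C i := ~` V i.
have irrC i : irreducible_closed (C i).
  split.
  - have /existsNP [q] := QV i; move=> /not_implyP [Qq nVq]; by exists q.
  - by rewrite /C closedC.
  move=> A B cA cB CAB; apply: contrapT => /not_orP [nA nB].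
  have /existsNP [a /not_implyP [Ca nAa]] := nA.
  have /existsNP [b /not_implyP [Cb nBb]] := nB.
  have oA : open (~` A) by rewrite openC.
  have oB : open (~` B) by rewrite openC.
  have [m im HA] : exists2 m, le i m & Q m `<=` V m `|` p i m @^-1` (~` A).
    by apply: Mx => // ZA; apply: Ca; exists (~` A).
  have [m' im' HB] : exists2 m, le i m & Q m `<=` V m `|` p i m @^-1` (~` B).
    by apply: Mx => // ZB; apply: Cb; exists (~` B).
  have [n [mn m'n]] := ledir m m'.
  have HA' := Mpull _ _ _ _ im mn HA.
  have HB' := Mpull _ _ _ _ im' m'n HB.
  apply: (QV n) => y Qy.
  case: (HA' y Qy) => // nAy; case: (HB' y Qy) => // nBy.
  apply: (Vp _ _ (letr _ _ _ im mn)); apply: contrapT => nV.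
  by case: (CAB _ nV).
have gen i : exists x : X i, C i = closure [set x].
  by apply: (proj2 (sob i)).
pose xs i : X i := proj1_sig (cid (gen i)).
have xsP i : C i = closure [set xs i] := proj2_sig (cid (gen i)).
have CP i y : C i y <-> spec_le y (xs i) by rewrite xsP closure1P.
have Cxs i : C i (xs i) by apply/CP.
have thr i j : le i j -> p i j (xs j) = xs i.
  move=> ij; apply: (T0_antisym (proj1 (sob i))).
  - apply/CP => Vy; apply: (Cxs j); exact: Vp ij _ Vy.
  - move=> U oU Ux; apply: contrapT => nU.
    have nZU : ~ Z (E i U) by move=> ZU; apply: (Cxs i); exists U.
    have [m im HM] := Mx i U oU nZU.
    have [n [mn jn]] := ledir m j.
    apply: (QV n) => y Qy.
    case: (Mpull _ _ _ _ im mn HM y Qy) => // Uy.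
    rewrite /= -(pcomp _ _ _ ij jn) in Uy.
    apply: (Vp _ _ jn); apply: contrapT => /CP nV.
    by apply: nU; apply: (nV (p i j @^-1` U)) => //; exact: pcont.
have limx : (xs : prod_topology X) \in proj_lim le p.
  by apply/mem_set => i j ij; exact: thr.
pose x : proj_lim_space le p := exist _ (xs : prod_topology X) limx.
exists x; split.
  move=> i /=; have /existsNP [q /not_implyP [Qq nVq]] := QV i.
  by apply: (proj2 (hQ i)) Qq _; apply/CP.
move=> S B FS nB.
have [i [U [oU Ux HU]]] := lim_nbhs_dec ps nB.
apply: contrapT => nSB.
have ZU : Z (E i U).
  apply: Z0Z; split => //; exists S => // z Sz Uz.
  by apply: nSB; exists z; split => //; apply: HU.
by apply: (Cxs i); exists U.
Qed.

Unset Implicit Arguments.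
Set Strict Implicit.

Theorem lemma4p3 (I : Type) (le : I -> I -> Prop)
    (X : I -> topologicalType) (p : forall i j, X j -> X i) :
  projective_system le p ->
  (forall i, sober (X i)) ->
  (* (1) *)
  (forall Q : forall i, set (X i),
     (forall i, compact (Q i) /\ saturated (Q i)) ->
     (forall i j, le i j -> p i j @` Q j `<=` Q i) ->
     let L : set (proj_lim_space le p) :=
       [set x | forall i, Q i (sval x i)] in
     compact L /\ saturated L) /\
  (* (2) *)
  (forall K : set (proj_lim_space le p),
     compact K -> saturated K ->
     let Q : forall i, set (X i) :=
       fun i => upset [set sval x i | x in K] in
     [/\ forall i, compact (Q i) /\ saturated (Q i),
         forall i j, le i j -> p i j @` Q j `<=` Q i,
         K = [set x | forall i, Q i (sval x i)] &
         forall i j, le i j -> upset (p i j @` Q j) = Q i]).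
Proof.
move=> ps sob; split; last exact: part2.
move=> Q hQ QQ L; split; first exact: part1.
move=> x y Lx xy i.
apply: (proj2 (hQ i)) (Lx i) _.
exact: spec_le_cont (@lim_cont _ le X p i) xy.
Qed.
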